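(* Let $m\ge2$ and let $\mathbb N$ be the directed cycle $1\to2\to\cdots\to m\to1$, where agent $i$ receives $C_ix_{i-1}$ from agent $i-1$ (vertex $0$ being vertex $m$, $x_0:=x_m$), each $C_i$ a real full-row-rank matrix with $n$ columns, and $P_i=C_i'(C_iC_i')^{-1}C_i$. Assume $\bar{\mathbb N}$ is well-configured, i.e. for all $x_1,\dots,x_m\in\mathbb R^n$, $C_ix_i=C_ix_{i-1}$ for all $i$ implies $x_1=\cdots=x_m$. Then for arbitrary initial states $x_i(0)\in\mathbb R^n$, the iteration $$x_i(t+1)=x_i(t)-\tfrac12P_i\big(x_i(t)-x_{i-1}(t)\big),\qquad i=1,\dots,m,$$ makes all $x_i(t)$ converge to a common vector $x^*\in\mathbb R^n$ exponentially fast.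
   Context: $'$ denotes transpose; $P_i$ is the orthogonal projection onto $(\ker C_i)^\perp$. Exponentially fast: there exist $c>0$, $\rho\in[0,1)$ with $\|x_i(t)-x^*\|\le c\rho^t$ for all $i,t$. *)

(* Defs.v *)
From HB Require Import structures.
From mathcomp Require Import all_boot all_order all_algebra.
From mathcomp Require Import reals.
Set Implicit Arguments. Unset Strict Implicit. Unset Printing Implicit Defensive.
Import Order.TTheory GRing.Theory Num.Theory.
Local Open Scope ring_scope.

(* Agents are indexed by 'I_m; agent k (0-based) is the paper's agent k+1.
   The cyclic predecessor of k is ord_pred k (predecessor of 0 is m-1),
   matching the paper's convention "vertex 0 is vertex m". *)
Definition prev {m : nat} (i : 'I_m) : 'I_m := ord_pred i.

Definition proj_ker_perp {R : realType} {r n : nat} (C : 'M[R]_(r, n)) : 'M[R]_n :=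
  C^T *m invmx (C *m C^T) *m C.

Definition well_configured {R : realType} {m n : nat} (r : 'I_m -> nat)
  (C : forall i : 'I_m, 'M[R]_(r i, n)) : Prop :=
  forall x : 'I_m -> 'cV[R]_n,
    (forall i, C i *m x i = C i *m x (prev i)) -> forall i j, x i = x j.

Fixpoint traj {R : realType} {m n : nat} (r : 'I_m -> nat)
  (C : forall i : 'I_m, 'M[R]_(r i, n)) (x0 : 'I_m -> 'cV[R]_n) (t : nat)
  : 'I_m -> 'cV[R]_n :=
  match t with
  | 0 => x0
  | t'.+1 => let x := traj C x0 t' in
      fun i => x i - 2^-1 *: (proj_ker_perp (C i) *m (x i - x (prev i)))
  end.

(* Main.v *)
Require Import Defs.
From HB Require Import structures.
From mathcomp Require Import all_boot all_order all_algebra.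
From mathcomp Require Import reals.
From mathcomp Require Import classical_sets.
From mathcomp.algebra_tactics Require Import ring lra.
Set Implicit Arguments. Unset Strict Implicit. Unset Printing Implicit Defensive.
Import Order.TTheory GRing.Theory Num.Theory.
Local Open Scope ring_scope.

Section Vec.
Variable R : realType.

Definition dot {n} (u v : 'cV[R]_n) : R := \sum_k u k 0 * v k 0.
Definition nrm {n} (u : 'cV[R]_n) : R := dot u u.

Section VN.
Variable n : nat.
Implicit Types u v w : 'cV[R]_n.

Lemma dotC u v : dot u v = dot v u.
Proof. by apply: eq_bigr => k _; rewrite mulrC. Qed.

Lemma dotDl u v w : dot (u + v) w = dot u w + dot v w.
Proof. by rewrite /dot -big_split; apply: eq_bigr => k _; rewrite mxE mulrDl. Qed.

Lemma dotNl u w : dot (- u) w = - dot u w.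
Proof. by rewrite /dot -sumrN; apply: eq_bigr => k _; rewrite mxE mulNr. Qed.

Lemma dotBl u v w : dot (u - v) w = dot u w - dot v w.
Proof. by rewrite dotDl dotNl. Qed.

Lemma dotZl a u w : dot (a *: u) w = a * dot u w.
Proof. by rewrite /dot mulr_sumr; apply: eq_bigr => k _; rewrite mxE mulrA. Qed.

Lemma dotDr u v w : dot w (u + v) = dot w u + dot w v.
Proof. by rewrite dotC dotDl !(dotC w). Qed.
Lemma dotNr u w : dot w (- u) = - dot w u.
Proof. by rewrite dotC dotNl dotC. Qed.
Lemma dotBr u v w : dot w (u - v) = dot w u - dot w v.
Proof. by rewrite dotDr dotNr. Qed.
Lemma dotZr a u w : dot w (a *: u) = a * dot w u.
Proof. by rewrite dotC dotZl dotC. Qed.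
Lemma dot0l w : dot 0 w = 0.
Proof. by rewrite /dot big1 // => k _; rewrite mxE mul0r. Qed.
Lemma dot0r w : dot w 0 = 0.
Proof. by rewrite dotC dot0l. Qed.

Lemma dot_sumr (I : finType) (F : I -> 'cV[R]_n) w :
  dot w (\sum_i F i) = \sum_i dot w (F i).
Proof.
rewrite /dot exchange_big /=; apply: eq_bigr => k _.
by rewrite summxE mulr_sumr.
Qed.

Lemma dot_mulmx (A : 'M[R]_n) u v : dot (A *m u) v = dot u (A^T *m v).
Proof.
rewrite /dot.
under eq_bigr do rewrite mxE big_distrl /=.
rewrite exchange_big /=; apply: eq_bigr => j _.
rewrite mxE mulr_sumr; apply: eq_bigr => k _.
by rewrite mxE mulrCA mulrA.
Qed.

Lemma nrm_ge0 u : 0 <= nrm u.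
Proof. by apply: sumr_ge0 => k _; rewrite -expr2 sqr_ge0. Qed.

Lemma nrm_eq0 u : nrm u = 0 -> u = 0.
Proof.
move=> /eqP; rewrite psumr_eq0 => [/allP H|k _]; last by rewrite -expr2 sqr_ge0.
apply/matrixP => k l; rewrite (ord1 l) mxE.
by have /implyP := H k (mem_index_enum k) => /(_ isT); rewrite mulf_eq0 orbb => /eqP.
Qed.

Lemma entry_le (u : 'cV[R]_n) k : u k 0 ^+ 2 <= nrm u.
Proof.
rewrite /nrm /dot (bigD1 k) //= -expr2 lerDl.
by apply: sumr_ge0 => j _; rewrite -expr2 sqr_ge0.
Qed.

Lemma nrmD u v : nrm (u + v) = nrm u + 2 * dot u v + nrm v.
Proof. rewrite /nrm dotDl !dotDr (dotC v u); ring. Qed.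

Lemma nrmB u v : nrm (u - v) = nrm u - 2 * dot u v + nrm v.
Proof. rewrite /nrm dotBl !dotBr (dotC v u); ring. Qed.

Lemma nrmN u : nrm (- u) = nrm u.
Proof. by rewrite /nrm dotNl dotNr opprK. Qed.

Lemma nrmZ a u : nrm (a *: u) = a ^+ 2 * nrm u.
Proof. rewrite /nrm dotZl dotZr; ring. Qed.

Lemma nrm_add_le u v : nrm (u + v) <= 2 * nrm u + 2 * nrm v.
Proof.
have := nrm_ge0 (u - v); rewrite nrmB nrmD; lra.
Qed.

Lemma nrm_sub_le u v : nrm (u - v) <= 2 * nrm u + 2 * nrm v.
Proof. by have := nrm_add_le u (- v); rewrite nrmN. Qed.

End VN.

Lemma sum_sq_le (I : finType) (a : I -> R) :
  (\sum_i a i) ^+ 2 <= #|I|%:R * \sum_i a i ^+ 2.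
Proof.
rewrite expr2 mulr_suml.
have -> : \sum_i a i * \sum_j a j = \sum_i \sum_j a i * a j.
  by apply: eq_bigr => i _; rewrite mulr_sumr.
apply: (@le_trans _ _ (\sum_i \sum_j (2^-1 * a i ^+ 2 + 2^-1 * a j ^+ 2))).
  apply: ler_sum => i _; apply: ler_sum => j _.
  have := sqr_ge0 (a i - a j); lra.
have cI : forall x : R, \sum_(i : I) x = #|I|%:R * x.
  by move=> x; rewrite sumr_const mulr_natl; congr (_ *+ _); apply: eq_card.
rewrite (eq_bigr (fun i => #|I|%:R * (2^-1 * a i ^+ 2) + \sum_j 2^-1 * a j ^+ 2)); last first.
  by move=> i _; rewrite big_split /= cI.
rewrite big_split /= cI -!mulr_sumr; lra.
Qed.


Lemma nrm_sum_le n (I : finType) (F : I -> 'cV[R]_n) :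
  nrm (\sum_i F i) <= #|I|%:R * \sum_i nrm (F i).
Proof.
rewrite /nrm /dot.
under eq_bigr do rewrite summxE -expr2.
apply: (@le_trans _ _ (\sum_k #|I|%:R * \sum_i (F i k 0) ^+ 2)).
  by apply: ler_sum => k _; apply: sum_sq_le.
rewrite -mulr_sumr exchange_big /=.
apply: ler_wpM2l; first by rewrite ler0n.
by apply: ler_sum => i _; apply: ler_sum => k _; rewrite expr2.
Qed.

Definition opb {p q} (A : 'M[R]_(p, q)) : R := q%:R * \sum_i \sum_j A i j ^+ 2.

Lemma opb_ge0 p q (A : 'M[R]_(p, q)) : 0 <= opb A.
Proof.
by apply: mulr_ge0; [rewrite ler0n | apply: sumr_ge0 => i _; apply: sumr_ge0 => j _; apply: sqr_ge0].
Qed.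

Lemma nrm_mul_le p q (A : 'M[R]_(p, q)) (u : 'cV[R]_q) :
  nrm (A *m u) <= opb A * nrm u.
Proof.
rewrite /opb -mulrA mulr_suml mulr_sumr /nrm /dot.
apply: ler_sum => k _.
rewrite mxE -expr2.
have H := sum_sq_le (fun j : 'I_q => A k j * u j 0). rewrite card_ord in H. apply: (le_trans H).
apply: ler_wpM2l; first by rewrite ler0n.
rewrite mulr_suml; apply: ler_sum => j _.
rewrite exprMn; apply: ler_wpM2l; first exact: sqr_ge0.
by have := entry_le u j; rewrite expr2.
Qed.

Section Proj.
Variable n : nat.
Variable P : 'M[R]_n.
Hypothesis hP : P^T = P.
Hypothesis hPP : P *m P = P.

Lemma dotP u v : dot (P *m u) v = dot u (P *m v).
Proof. by rewrite dot_mulmx hP. Qed.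

Lemma dotPP u : dot (P *m u) (P *m u) = dot u (P *m u).
Proof. by rewrite dotP mulmxA hPP. Qed.

Lemma nrm_proj u : nrm u = nrm (P *m u) + nrm (u - P *m u).
Proof.
rewrite nrmB /nrm dotPP; ring.
Qed.

Lemma nrmP_le u : nrm (P *m u) <= nrm u.
Proof. by rewrite [X in _ <= X](nrm_proj u) lerDl nrm_ge0. Qed.

Lemma nrmQ_le u : nrm (u - P *m u) <= nrm u.
Proof. by rewrite [X in _ <= X](nrm_proj u) lerDr nrm_ge0. Qed.

Lemma step_pt (a w : 'cV[R]_n) : P *m a = a ->
  nrm (a - 2^-1 *: (P *m (a - w))) <=
    2^-1 * nrm a + 2^-1 * nrm w - 8^-1 * nrm (a - w).
Proof.
move=> Pa.
have E : a - 2^-1 *: (P *m (a - w)) = 2^-1 *: a + 2^-1 *: (P *m w).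
  rewrite mulmxBr Pa scalerBr opprB addrA addrAC; congr (_ + _).
  by rewrite -{1}(scale1r a) -scalerBl; congr (_ *: _); field.
have h1 : dot a (P *m w) = dot a w by rewrite -dotP Pa.
have hPw : nrm (P *m w) = dot w (P *m w) by rewrite /nrm dotPP.
rewrite E [nrm (a - w)]nrmB [nrm (_ + _)]nrmD !nrmZ dotZl dotZr h1.
have h2 := nrm_ge0 (a - P *m w).
have h3 := nrm_ge0 (w - P *m w).
rewrite nrmB h1 hPw in h2.
rewrite nrmB hPw in h3.
rewrite hPw.
have e : (2^-1 : R) ^+ 2 = 4^-1 by field.
rewrite e.
have e8 : (8^-1 : R) = 2^-1 * 4^-1 by field.
rewrite e8.
have e4 : (4^-1 : R) = 2^-1 * 2^-1 by field.
rewrite e4; lra.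
Qed.

End Proj.


Lemma nrm_trmx_eq0 p (z : 'rV[R]_p) : (z *m z^T) 0 0 = 0 -> z = 0.
Proof.
move=> H.
have : nrm z^T = 0.
  by rewrite -H /nrm /dot mxE; apply: eq_bigr => l _; rewrite !mxE.
by move/nrm_eq0 => Hz; rewrite -[z]trmxK Hz trmx0.
Qed.

Lemma coerc_single p q (M : 'M[R]_(q, p)) :
  exists L : 'M[R]_(p, q), forall x : 'cV[R]_p,
    (forall k : 'cV[R]_p, M *m k = 0 -> dot k x = 0) -> x = L *m (M *m x).
Proof.
pose N := M^T.
pose Kr := kermx N.
pose O := kermx Kr^T.
pose B := row_base O.
have BO : (B :=: O)%MS by apply: eq_row_base.
have BNfree : row_free (B *m N).
  apply: inj_row_free => v Hv.
  pose z := v *m B.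
  have zO : (z <= O)%MS by rewrite -BO submxMl.
  have zK : z *m Kr^T = 0 by apply/sub_kermxP.
  have zN : z *m N = 0 by rewrite /z -mulmxA.
  have zKr : (z <= Kr)%MS by apply/sub_kermxP.
  have [w zw] := submxP zKr.
  have zz : z *m z^T = 0 by rewrite {2}zw trmx_mul mulmxA zK mul0mx.
  have z0 : z = 0 by apply: nrm_trmx_eq0; rewrite zz mxE.
  apply: (row_free_inj (row_base_free O)).
  by rewrite mul0mx -/B -/z z0.
have [Rinv HR] := row_freeP BNfree.
have e : B *m N *m (Rinv *m B) = B by rewrite mulmxA HR mul1mx.
exists (Rinv *m B)^T => x Hx.
have xO : (x^T <= O)%MS.
  apply/sub_kermxP; apply/matrixP => i j.
  rewrite (ord1 i) !mxE.
  have Hk := Hx (row j Kr)^T.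
  have e1 : M *m (row j Kr)^T = 0.
    by rewrite -[M]trmxK -trmx_mul -/N -row_mul mulmx_ker row0 trmx0.
  transitivity (dot (row j Kr)^T x); last exact: Hk e1.
  by rewrite /dot; apply: eq_bigr => l _; rewrite !mxE mulrC.
have xB : (x^T <= B)%MS by rewrite BO.
have rowEq : x^T = x^T *m N *m (Rinv *m B).
  rewrite -(mulmxKpV xB); set y := x^T *m pinvmx B.
  by rewrite -[y *m B *m N]mulmxA -mulmxA e.
by rewrite -[x]trmxK {1}rowEq -[N]/(M^T) -trmx_mul !trmx_mul trmxK.
Qed.


Lemma coerc_family (I : finType) p (M : I -> 'M[R]_p) :
  exists K : R, 0 < K /\ forall x : 'cV[R]_p,
    (forall k : 'cV[R]_p, (forall i, M i *m k = 0) -> dot k x = 0) ->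
    nrm x <= K * \sum_i nrm (M i *m x).
Proof.
pose H := \sum_i (M i)^T *m M i.
have [L HL] := coerc_single H.
pose S := \sum_j opb (M j)^T.
have S0 : 0 <= S by apply: sumr_ge0 => j _; apply: opb_ge0.
exists (1 + opb L * (#|I|%:R * S)); split.
  by apply: ltr_pwDl => //; apply: mulr_ge0; [apply: opb_ge0|apply: mulr_ge0].
move=> x Hx.
have HxH : forall k : 'cV[R]_p, H *m k = 0 -> dot k x = 0.
  move=> k Hk; apply: Hx => i.
  have : dot k (H *m k) = \sum_i nrm (M i *m k).
    rewrite /H mulmx_suml dot_sumr; apply: eq_bigr => j _.
    by rewrite -mulmxA dotC dot_mulmx trmxK.
  rewrite Hk dot0r => /esym /eqP; rewrite psumr_eq0; last by move=> j _; apply: nrm_ge0.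
  by move/allP => /(_ i (mem_index_enum i)) /= /eqP /nrm_eq0.
rewrite {1}(HL x HxH).
apply: (le_trans (nrm_mul_le _ _)).
have nS : 0 <= \sum_i nrm (M i *m x) by apply: sumr_ge0 => i _; apply: nrm_ge0.
have hx : nrm (H *m x) <= #|I|%:R * S * \sum_i nrm (M i *m x).
  rewrite /H mulmx_suml.
  apply: (le_trans (nrm_sum_le _)).
  rewrite -mulrA; apply: ler_wpM2l; first by rewrite ler0n.
  rewrite mulr_sumr; apply: ler_sum => i _.
  rewrite -mulmxA; apply: (le_trans (nrm_mul_le _ _)).
  apply: ler_wpM2r; first exact: nrm_ge0.
  rewrite /S (bigD1 i) //= lerDl.
  by apply: sumr_ge0 => j _; apply: opb_ge0.
have oL := opb_ge0 L.
have := ler_wpM2l oL hx.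
rewrite mulrDl mul1r; move=> h.
have : 0 <= opb L * (#|I|%:R * S) * \sum_i nrm (M i *m x).
  by apply: mulr_ge0 => //; apply: mulr_ge0 => //; apply: mulr_ge0 => //; rewrite ler0n.
rewrite !mulrA in h *; lra.
Qed.


Lemma mono_nat (f : nat -> R) : (forall t, f t <= f t.+1) -> forall t s, (t <= s)%N -> f t <= f s.
Proof.
move=> H t s /subnK <-; elim: (s - t)%N => [|k IH] //=.
by apply: (le_trans IH); rewrite addSn; apply: H.
Qed.

Definition glim (a : nat -> R) (K q : R) : R :=
  sup (fun x => exists t, a t - K / (1 - q) * q ^+ t = x).

Lemma geo_limit (a : nat -> R) (K q : R) : 0 <= q -> q < 1 ->
  (forall t, `|a t.+1 - a t| <= K * q ^+ t) ->
  forall t, `|a t - glim a K q| <= K / (1 - q) * q ^+ t.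
Proof.
move=> q0 q1 H.
have K0 : 0 <= K by have := H 0%N; rewrite expr0 mulr1; apply: le_trans.
pose c := K / (1 - q).
have c0 : 0 <= c by apply: divr_ge0 => //; rewrite subr_ge0 ltW.
have cK : c * (1 - q) = K by rewrite /c divfK // subr_eq0 gt_eqF.
pose b t := a t - c * q ^+ t.
pose e t := a t + c * q ^+ t.
have qt : forall t, 0 <= q ^+ t by move=> t; apply: exprn_ge0.
have bm : forall t, b t <= b t.+1.
  move=> t; rewrite /b exprS.
  have := H t; rewrite ler_norml => /andP[h1 h2].
  have : c * (q * q ^+ t) = c * q ^+ t - K * q ^+ t by rewrite -cK; ring.
  move=> ->; lra.
have em : forall t, e t.+1 <= e t.
  move=> t; rewrite /e exprS.
  have := H t; rewrite ler_norml => /andP[h1 h2].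
  have : c * (q * q ^+ t) = c * q ^+ t - K * q ^+ t by rewrite -cK; ring.
  move=> ->; lra.
have em' : forall t, (fun u => - e u) t <= (fun u => - e u) t.+1 by move=> t /=; rewrite lerN2.
have be : forall t s, b t <= e s.
  move=> t s; case: (leqP t s) => hts.
    apply: (le_trans (mono_nat bm hts)); rewrite /b /e.
    have := qt s; have := mulr_ge0 c0 (qt s); lra.
  have := mono_nat em' (ltnW hts); rewrite /= lerN2 => hs.
  apply: le_trans hs; rewrite /b /e.
  have := mulr_ge0 c0 (qt t); lra.
pose E : set R := fun x => exists t, b t = x.
have hub : has_ubound E by exists (e 0%N) => y [t <-].
have hne : (E !=set0)%classic by exists (b 0%N), 0%N.
have -> : glim a K q = sup E by [].
move=> t.
have h1 : b t <= sup E by apply: (ub_le_sup hub); exists t.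
have h2 : sup E <= e t by apply: ge_sup => // y [s <-].
rewrite ler_norml -/c; apply/andP; split; rewrite /b /e in h1 h2; lra.
Qed.


Lemma bernoulli (h : R) (t : nat) : 0 <= h -> 1 + t%:R * h <= (1 + h) ^+ t.
Proof.
move=> h0; elim: t => [|t IH]; first by rewrite expr0 mul0r addr0.
rewrite exprS -natr1 mulrDl mul1r.
have := mulr_ge0 (ler0n R t) h0.
have : 0 <= (1 + h) by lra.
move=> h1 h2; have := ler_wpM2l h1 IH; nra.
Qed.

Lemma geo_zero (z K q : R) : 0 <= q -> q < 1 -> (forall t, `|z| <= K * q ^+ t) -> z = 0.
Proof.
move=> q0 q1 H.
have [q00|qn0] := eqVneq q 0.
  by have := H 1%N; rewrite q00 expr1 mulr0 normr_le0 => /eqP.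
have qp : 0 < q by rewrite lt_neqAle eq_sym qn0 q0.
pose h := q^-1 - 1.
have h0 : 0 < h by rewrite /h subr_gt0 invf_gt1.
apply/eqP; apply/negPn/negP => zn0.
have za : 0 < `|z| by rewrite normr_gt0.
pose y := K / (h * `|z|).
have y0 : 0 <= y.
  have := H 0%N; rewrite expr0 mulr1 => hK.
  by apply: divr_ge0; [apply: le_trans hK | apply: mulr_ge0; apply: ltW].
have := archi_boundP y0; set t := Num.Def.archi_bound y => ht.
have H1 : `|z| * (q^-1) ^+ t <= K.
  have := ler_wpM2r (exprn_ge0 t (ltW (eq_ind_r is_true qp (invr_gt0 q)))) (H t).
  by rewrite -mulrA -exprMn mulfV // expr1n mulr1.
have H2 := bernoulli t (ltW h0).
have e1 : 1 + h = q^-1 by rewrite /h addrC subrK.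
rewrite e1 in H2.
have H3 : `|z| * (1 + t%:R * h) <= K.
  by apply: le_trans H1; apply: ler_wpM2l => //; apply: ltW.
have : K < t%:R * (h * `|z|).
  by rewrite -ltr_pdivrMr ?mulr_gt0.
nra.
Qed.

End Vec.

Section Main.
Variable R : realType.
Variables (m n : nat) (r : 'I_m.+1 -> nat) (C : forall i : 'I_m.+1, 'M[R]_(r i, n)).
Hypothesis Cfree : forall i, row_free (C i).

Definition Pm i := proj_ker_perp (C i).

Lemma unitC i : C i *m (C i)^T \in unitmx.
Proof.
rewrite -row_free_unit; apply: inj_row_free => v Hv.
have : v *m C i = 0.
  apply: nrm_trmx_eq0.
  by rewrite trmx_mul mulmxA -(mulmxA v) Hv mul0mx mxE.
by move=> H; apply: (row_free_inj (Cfree i)); rewrite H mul0mx.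
Qed.

Lemma PT i : (Pm i)^T = Pm i.
Proof.
rewrite /Pm /proj_ker_perp !trmx_mul trmxK trmx_inv trmx_mul trmxK.
by rewrite mulmxA.
Qed.

Lemma CP i : C i *m Pm i = C i.
Proof.
by rewrite /Pm /proj_ker_perp !mulmxA mulmxV ?unitC // mul1mx.
Qed.

Lemma PP i : Pm i *m Pm i = Pm i.
Proof.
by rewrite {1}/Pm /proj_ker_perp -mulmxA CP.
Qed.


Definition step (x : 'I_m.+1 -> 'cV[R]_n) (i : 'I_m.+1) : 'cV[R]_n :=
  x i - 2^-1 *: (Pm i *m (x i - x (Defs.prev i))).

Lemma trajS x0 t i : traj C x0 t.+1 i = step (traj C x0 t) i.
Proof. by []. Qed.

Definition En (u : 'I_m.+1 -> 'cV[R]_n) := \sum_i nrm (u i).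
Definition Dv (u : 'I_m.+1 -> 'cV[R]_n) := \sum_i nrm (u i - u (Defs.prev i)).
Definition inU (u : 'I_m.+1 -> 'cV[R]_n) := forall i, Pm i *m u i = u i.
Definition inS (u : 'I_m.+1 -> 'cV[R]_n) := inU u /\
  forall c, (forall i, Pm i *m c = c) -> dot c (\sum_i u i) = 0.

Lemma sum_prev (F : 'I_m.+1 -> R) : \sum_i F (Defs.prev i) = \sum_i F i.
Proof. by rewrite [RHS](reindex_inj (@ord_pred_inj _)). Qed.

Lemma En_ge0 u : 0 <= En u.
Proof. by apply: sumr_ge0 => i _; apply: nrm_ge0. Qed.

Lemma Dv_ge0 u : 0 <= Dv u.
Proof. by apply: sumr_ge0 => i _; apply: nrm_ge0. Qed.

Lemma energy u : inU u -> En (fun i => step u i) <= En u - 8^-1 * Dv u.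
Proof.
move=> hU; rewrite /En /Dv.
apply: (@le_trans _ _ (\sum_i (2^-1 * nrm (u i) + 2^-1 * nrm (u (Defs.prev i))
                               - 8^-1 * nrm (u i - u (Defs.prev i))))).
  apply: ler_sum => i _; apply: step_pt; [exact: PT | exact: PP | exact: (hU i)].
rewrite big_split big_split /= sumrN -!mulr_sumr.
rewrite (sum_prev (fun i => nrm (u i))); lra.
Qed.

Lemma stepU u : inU u -> inU (fun i => step u i).
Proof.
move=> hU i; rewrite /step mulmxBr hU -scalemxAr mulmxA PP //.
Qed.

Lemma dotPc c i v : Pm i *m c = c -> dot c (Pm i *m v) = dot c v.
Proof. by move=> hc; rewrite -(dotP (PT i)) hc. Qed.

Lemma sumW c v : (forall i, Pm i *m c = c) ->
  \sum_i dot c (Pm i *m (v i - v (Defs.prev i))) = 0.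
Proof.
move=> hc.
under eq_bigr do rewrite dotPc ?hc // dotBr.
by rewrite sumrB (sum_prev (fun i => dot c (v i))) subrr.
Qed.

Lemma stepS u : inS u -> inS (fun i => step u i).
Proof.
move=> [hU hS]; split; first exact: stepU.
move=> c hc; rewrite dot_sumr /step.
under eq_bigr do rewrite dotBr dotZr.
by rewrite sumrB -mulr_sumr sumW // mulr0 subr0 -dot_sumr hS.
Qed.

Lemma d0S x : inS (fun i => step x i - x i).
Proof.
have e : forall i, step x i - x i = - (2^-1 *: (Pm i *m (x i - x (Defs.prev i)))).
  by move=> i; rewrite /step addrAC subrr add0r.
split.
  by move=> i; rewrite e mulmxN -scalemxAr mulmxA PP.
move=> c hc; rewrite dot_sumr.
under eq_bigr do rewrite e dotNr dotZr.
by rewrite sumrN -mulr_sumr sumW // mulr0 oppr0.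
Qed.

Lemma sub4 (V : zmodType) (x y z w : V) : (x - y) - (z - w) = (x - z) - (y - w).
Proof. by rewrite !opprB addrACA [RHS]addrACA [- z + _]addrC. Qed.

Lemma dstep x y i : step x i - step y i = step (fun j => x j - y j) i.
Proof.
rewrite /step sub4 -scalerBr -mulmxBr; congr (_ - _ *: (_ *m _)).
by rewrite sub4.
Qed.



Lemma term_le u i : nrm (u i - u (Defs.prev i)) <= Dv u.
Proof.
rewrite /Dv (bigD1 i) //= lerDl.
by apply: sumr_ge0 => j _; apply: nrm_ge0.
Qed.

Lemma nrm0 : nrm (0 : 'cV[R]_n) = 0.
Proof. by rewrite /nrm dot0l. Qed.

Lemma pow4_le (i k : nat) : (i <= k)%N -> (4 : R) ^+ i <= 4 ^+ k.
Proof.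
move=> hi; rewrite -(subnK hi) exprD; apply: ler_peMl; [exact: exprn_ge0 | apply: exprn_ege1; lra].
Qed.

Lemma Qle i v : nrm ((1%:M - Pm i) *m v) <= nrm v.
Proof. by rewrite mulmxBl mul1mx; apply: nrmQ_le; [apply: PT | apply: PP]. Qed.

Lemma coercS : exists K : R, 0 < K /\ forall u, inS u -> En u <= K * Dv u.
Proof.
have [K2 [K2p HK2]] := coerc_family (fun i : 'I_m.+1 => 1%:M - Pm i).
pose M : R := (m.+1)%:R.
have M1 : 1 <= M by rewrite /M ler1n.
have M0 : 0 <= M by apply: le_trans M1.
pose K1 := M * (4 * (K2 * (M * (4 * (M * (M * 4 ^+ m))))) + 4 * (M * (M * 4 ^+ m)) + 2 * 4 ^+ m).
have K10 : 0 <= K1.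
  apply: mulr_ge0 => //; rewrite -addrA; apply: addr_ge0.
    apply: mulr_ge0 => //; apply: mulr_ge0; first exact: ltW.
    apply: mulr_ge0 => //; apply: mulr_ge0 => //; apply: mulr_ge0 => //; apply: mulr_ge0 => //.
    exact: exprn_ge0.
  apply: addr_ge0; apply: mulr_ge0 => //; try exact: exprn_ge0.
  by apply: mulr_ge0 => //; apply: mulr_ge0 => //; apply: exprn_ge0.
exists (1 + K1); split; first by apply: ltr_pwDl.
move=> u [hU hS].
set D := Dv u.
have D0 : 0 <= D by apply: Dv_ge0.
pose u0 := u ord0.
pose w i := u i - u0.
have chain : forall l, (l < m.+1)%N -> nrm (u (inord l) - u0) <= 4 ^+ l * D.
  elim => [|l IH] hl.
    have -> : inord 0 = ord0 :> 'I_m.+1 by apply: val_inj; rewrite /= inordK.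
    by rewrite subrr nrm0 expr0 mul1r.
  have hl' : (l < m.+1)%N by apply: ltnW.
  have hp : Defs.prev (inord l.+1 : 'I_m.+1) = inord l.
    apply: val_inj; rewrite /= !inordK // addSn /= modnDr modn_small //.
  have -> : u (inord l.+1) - u0 = (u (inord l.+1) - u (Defs.prev (inord l.+1))) + (u (inord l) - u0).
    by rewrite hp addrA subrK.
  apply: (le_trans (nrm_add_le _ _)).
  have h1 := term_le u (inord l.+1).
  have h2 := IH hl'.
  have h3 : 1 <= (4 : R) ^+ l by apply: exprn_ege1; lra.
  have h4 : 0 <= ((4 : R) ^+ l - 1) * D by apply: mulr_ge0; rewrite ?subr_ge0.
  rewrite exprS -/D; rewrite -/D in h1; lra.
pose B := 4 ^+ m * D.
have B0 : 0 <= B by apply: mulr_ge0 => //; apply: exprn_ge0.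
have nw : forall i, nrm (w i) <= B.
  move=> i; have := chain i (ltn_ord i); rewrite inord_val => h.
  apply: le_trans h _; apply: ler_wpM2r => //; apply: pow4_le; rewrite -ltnS; exact: ltn_ord.
pose Z := M * (M * B).
have sw : nrm (\sum_i w i) <= Z.
  apply: (le_trans (nrm_sum_le _)); rewrite card_ord.
  apply: ler_wpM2l => //.
  apply: (@le_trans _ _ (\sum_(i < m.+1) B)); first by apply: ler_sum => j _; apply: nw.
  by rewrite sumr_const card_ord -mulr_natl.
pose s := \sum_i u i.
have es : \sum_i w i = s - M *: u0.
  by rewrite /w sumrB sumr_const card_ord -scaler_nat.
have Qs : forall i, nrm ((1%:M - Pm i) *m s) <= 4 * Z.
  move=> i.
  have Qu : (1%:M - Pm i) *m u i = 0 by rewrite mulmxBl mul1mx hU subrr.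
  have -> : (1%:M - Pm i) *m s = - (M *: ((1%:M - Pm i) *m w i)) + (1%:M - Pm i) *m \sum_j w j.
    rewrite es /w !mulmxBr Qu sub0r scalerN opprK -scalemxAr.
    by rewrite addrCA subrr addr0.
  apply: (le_trans (nrm_add_le _ _)); rewrite nrmN nrmZ.
  have h1 := le_trans (Qle i (w i)) (nw i).
  have h2 := le_trans (Qle i (\sum_j w j)) sw.
  have h3 : M ^+ 2 * nrm ((1%:M - Pm i) *m w i) <= M ^+ 2 * B.
    by apply: ler_wpM2l => //; apply: sqr_ge0.
  have e : M ^+ 2 * B = Z by rewrite /Z; ring.
  lra.
pose Y := K2 * (M * (4 * Z)).
have ns : nrm s <= Y.
  have Hs : forall k : 'cV[R]_n, (forall i, (1%:M - Pm i) *m k = 0) -> dot k s = 0.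
    move=> k hk; apply: hS => i; apply/eqP; rewrite eq_sym -subr_eq0.
    by have := hk i; rewrite mulmxBl mul1mx => ->.
  apply: (le_trans (HK2 s Hs)); apply: ler_wpM2l; first exact: ltW.
  apply: (@le_trans _ _ (\sum_(i < m.+1) 4 * Z)); first by apply: ler_sum => j _; apply: Qs.
  by rewrite sumr_const card_ord -[_ *+ m.+1]mulr_natl.
have nu0 : nrm u0 <= 2 * Y + 2 * Z.
  have e : M *: u0 = s - \sum_i w i by rewrite es opprB addrC subrK.
  have h1 : nrm (M *: u0) <= 2 * Y + 2 * Z.
    by rewrite e; apply: (le_trans (nrm_sub_le _ _)); lra.
  have h2 : nrm u0 <= nrm (M *: u0).
    rewrite nrmZ ler_peMl ?nrm_ge0 //; exact: exprn_ege1.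
  exact: le_trans h2 h1.
have hE : En u <= M * (2 * (2 * Y + 2 * Z) + 2 * B).
  rewrite /En.
  apply: (@le_trans _ _ (\sum_(i < m.+1) (2 * (2 * Y + 2 * Z) + 2 * B))); last first.
    by rewrite sumr_const card_ord -[_ *+ m.+1]mulr_natl.
  apply: ler_sum => i _.
  have -> : u i = u0 + w i by rewrite /w addrC subrK.
  apply: (le_trans (nrm_add_le _ _)); have := nw i; lra.
apply: (le_trans hE).
have -> : M * (2 * (2 * Y + 2 * Z) + 2 * B) = K1 * D by rewrite /Y /Z /B /K1; ring.
by rewrite mulrDl mul1r lerDr.
Qed.


Lemma inS_ext u v : (forall i, u i = v i) -> inS u -> inS v.
Proof.
move=> e [hU hS]; split => [i|c hc]; first by rewrite -e hU.
have -> : \sum_i v i = \sum_i u i by apply: eq_bigr => i _; rewrite e.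
exact: hS.
Qed.

Lemma En_ext u v : (forall i, u i = v i) -> En u = En v.
Proof. by move=> e; apply: eq_bigr => i _; rewrite e. Qed.

Lemma nrm_le_En u i : nrm (u i) <= En u.
Proof.
rewrite /En (bigD1 i) //= lerDl.
by apply: sumr_ge0 => j _; apply: nrm_ge0.
Qed.

Lemma pow_mono (x y : R) t : 0 <= x -> x <= y -> x ^+ t <= y ^+ t.
Proof.
move=> x0 xy; elim: t => [|t IH]; first by rewrite !expr0.
rewrite !exprS; apply: ler_pM => //; exact: exprn_ge0.
Qed.

Lemma mul_entry_le p q (A : 'M[R]_(p, q)) (v : 'cV[R]_q) b rr :
  (forall k, `|v k 0| <= b) -> `|(A *m v) rr 0| <= (\sum_k `|A rr k|) * b.
Proof.
move=> hv; rewrite mxE mulr_suml.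
apply: (le_trans (ler_norm_sum _ _ _)); apply: ler_sum => k _.
by rewrite normrM; apply: ler_wpM2l.
Qed.

Lemma main_conv (wc : well_configured C) (x0 : 'I_m.+1 -> 'cV[R]_n) :
  exists xstar : 'cV[R]_n, exists c rho : R,
    0 < c /\ 0 <= rho /\ rho < 1 /\
    forall (i : 'I_m.+1) (t : nat) (k : 'I_n),
      `|traj C x0 t i k 0 - xstar k 0| <= c * rho ^+ t.
Proof.
have [K [K0 HK]] := coercS.
pose K' := K + 1.
have K'0 : 0 < K' by rewrite /K'; lra.
pose a := (8 * K')^-1.
have a0 : 0 < a by rewrite /a invr_gt0; lra.
have a1 : a < 1 by rewrite /a invf_lt1; rewrite /K'; lra.
have aK : a * K' = 8^-1 by rewrite /a; field; lra.
pose q2 := 1 - a.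
pose d t := fun i => traj C x0 t.+1 i - traj C x0 t i.
have dstepE : forall t i, d t.+1 i = step (d t) i.
  by move=> t i; rewrite /d (trajS x0 t.+1) (trajS x0 t) dstep.
have dS : forall t, inS (d t).
  elim=> [|t IH]; first exact: d0S.
  by apply: (inS_ext _ (stepS IH)) => i; rewrite dstepE.
pose E0 := En (d 0%N).
have E00 : 0 <= E0 by apply: En_ge0.
have decay : forall t, En (d t) <= q2 ^+ t * E0.
  elim=> [|t IH]; first by rewrite expr0 mul1r.
  have h1 := energy (dS t).1.
  have h2 := HK _ (dS t).
  have e : En (d t.+1) = En (fun i => step (d t) i) by apply: En_ext => i; rewrite dstepE.
  have D0 := Dv_ge0 (d t).
  have h3 : En (d t) <= K' * Dv (d t) by rewrite /K' mulrDl mul1r; lra.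
  have h4 : a * En (d t) <= 8^-1 * Dv (d t).
    by rewrite -aK -mulrA; apply: ler_wpM2l => //; apply: ltW.
  have h5 : En (d t.+1) <= q2 * En (d t) by rewrite e /q2; lra.
  apply: (le_trans h5); rewrite exprS -mulrA; apply: ler_wpM2l => //.
  by rewrite /q2 subr_ge0 ltW.
pose rho := 1 - a / 2.
have rho0 : 0 <= rho by rewrite /rho; lra.
have rho1 : rho < 1 by rewrite /rho; lra.
have rq : q2 <= rho ^+ 2.
  rewrite /q2 /rho; have := sqr_ge0 (a / 2); rewrite expr2 => h.
  rewrite expr2; lra.
have q20 : 0 <= q2 by rewrite /q2; lra.
pose c1 := 1 + E0.
have c10 : 0 < c1 by rewrite /c1; lra.
have dbound : forall t i (k : 'I_n), `|d t i k 0| <= c1 * rho ^+ t.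
  move=> t i k.
  have h1 : `|d t i k 0| ^+ 2 <= E0 * (rho ^+ t) ^+ 2.
    rewrite real_normK ?num_real //.
    apply: (le_trans (entry_le _ _)); apply: (le_trans (nrm_le_En _ i)).
    apply: (le_trans (decay t)); rewrite mulrC; apply: ler_wpM2l => //.
    by rewrite -exprM mulnC exprM; apply: pow_mono.
  have Y0 : 0 <= rho ^+ t by apply: exprn_ge0.
  have X0 : 0 <= `|d t i k 0| by [].
  move: h1; set X := `|d t i k 0|; set Y := rho ^+ t => h1.
  rewrite -ler_sqr ?nnegrE //; last by apply: mulr_ge0 => //; rewrite /c1; lra.
  rewrite exprMn; apply: (le_trans h1); apply: ler_wpM2r; first exact: sqr_ge0.
  rewrite /c1 expr2; nra.
pose L i k := glim (fun t => traj C x0 t i k 0) c1 rho.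
pose c2 := c1 / (1 - rho).
have HL : forall i k t, `|traj C x0 t i k 0 - L i k| <= c2 * rho ^+ t.
  move=> i k; apply: geo_limit => // t.
  by have := dbound t i k; rewrite /d !mxE.
pose y i := \col_k L i k.
have cons : forall i, C i *m y i = C i *m y (Defs.prev i).
  move=> i; apply/eqP; rewrite -subr_eq0 -mulmxBr; apply/eqP.
  set p := Defs.prev i.
  apply/matrixP => rr c0; rewrite (ord1 c0) [RHS]mxE.
  apply: (@geo_zero R _ ((\sum_k `|C i rr k|) * (2 * c2 + 2 * c1)) rho) => // t.
  pose x := traj C x0 t.
  have ed : Pm i *m (x i - x p) = - (2 *: d t i).
    rewrite /d (trajS x0 t) /step -/x -/p addrAC subrr add0r scalerN opprK scalerA.
    by rewrite divff ?scale1r // pnatr_eq0.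
  have eC : C i *m (y i - y p) = C i *m ((y i - x i) - (y p - x p) - 2 *: d t i).
    have hx : C i *m (x i - x p) = - (C i *m (2 *: d t i)) by rewrite -mulmxN -ed mulmxA CP.
    rewrite (sub4 (y i)) !mulmxBr -(mulmxBr (C i) (x i)) hx opprK addrK //.
  rewrite eC -mulrA; apply: mul_entry_le => k.
  have h3 := dbound t i k.
  move: (d t i) h3 => dv h3.
  rewrite !mxE /x.
  have h1 := HL i k t. have h2 := HL p k t.
  rewrite distrC in h1; rewrite distrC in h2.
  set A1 := L i k - traj C x0 t i k 0. set A2 := L p k - traj C x0 t p k 0.
  have t1 := ler_normD (A1 - A2) (- (2 * dv k 0)).
  have t2 := ler_normB A1 A2.
  rewrite normrN normrM ger0_norm // in t1.
  lra.
have yeq := wc y cons.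
exists (y ord0), c2, rho; split.
  by rewrite /c2 divr_gt0 // subr_gt0.
split => //; split => // i t k.
by rewrite (yeq ord0 i) mxE; apply: HL.
Qed.

End Main.

Unset Implicit Arguments.

Theorem theorem7 (R : realType) (m n : nat) (r : 'I_m -> nat)
  (C : forall i : 'I_m, 'M[R]_(r i, n)) :
  (2 <= m)%N ->
  (forall i, row_free (C i)) ->
  well_configured C ->
  forall x0 : 'I_m -> 'cV[R]_n,
  exists xstar : 'cV[R]_n, exists c rho : R,
    0 < c /\ 0 <= rho /\ rho < 1 /\
    forall (i : 'I_m) (t : nat) (k : 'I_n),
      `|traj C x0 t i k 0 - xstar k 0| <= c * rho ^+ t.
Proof.
case: m r C => [|m] r C hm Cf wc x0; first by [].
exact: (main_conv Cf wc x0).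
Qed.
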